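(* Let $\mathcal{X}$ be finite and let $V_n:\mathcal{X}^n\rightsquigarrow\mathcal{Y}_n$ ($\mathcal{Y}_n$ countable) be a channel sequence, with $\overline{p}_n$ a distribution on $\mathcal{X}^n$ attaining $\mathbf{I}(V_n)=\max_p\mathbf{I}(V_n,p)$. Let $\varphi_n=-\log_2\inf\big(\{V_n(y|x)\}_{x,y}\setminus\{0\}\big)\ge0$. For a sequence $\delta_n\in[0,1]$ define $\hat p_n(x)=(1-\delta_n)\overline{p}_n(x)+\delta_n/|\mathcal{X}|^n$. Then $\mathbf{I}(V_n)-\mathbf{I}(V_n,\hat p_n)=O(\delta_n(n+\varphi_n))$. In particular, if $\delta_n=o(1/\varphi_n)$ and $\delta_n=o(1)$, and the limit $\mathbf{I}(V)=\lim_n\mathbf{I}(V_n)/n$ exists, then $\lim_{n\to\infty}\mathbf{I}(V_n,\hat p_n)/n=\mathbf{I}(V)$; and if $\delta_n=o(1/\varphi_n)$ and $\delta_n=o(1/n)$, then $\lim_{n\to\infty}[\mathbf{I}(V_n)-\mathbf{I}(V_n,\hat p_n)]=0$.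
   Context: A channel $W:\mathcal{A}\rightsquigarrow\mathcal{B}$ is a family of probability distributions $W(\cdot|a)$ on $\mathcal{B}$. For a distribution $p$: $p\bullet W(b)=\sum_a p(a)W(b|a)$; $\mathbf{i}(W,p,a,b)=\log_2\frac{W(b|a)}{p\bullet W(b)}$ if $W(b|a)>0$ and $p\bullet W(b)>0$, else $0$; $\mathbf{I}(W,p)=\sum_{a,b}p(a)W(b|a)\mathbf{i}(W,p,a,b)$, $\mathbf{I}(W)=\max_p\mathbf{I}(W,p)$. $a_n=O(b_n)$ means $|a_n|\le Cb_n$ for some constant $C$ and all large $n$; $a_n=o(b_n)$ means $a_n/b_n\to0$. *)

(* Defs.v *)
From mathcomp Require Import all_boot all_order all_algebra.
From mathcomp Require Import all_classical all_reals all_analysis.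
Set Implicit Arguments. Unset Strict Implicit. Unset Printing Implicit Defensive.
Import Order.TTheory GRing.Theory Num.Theory numFieldNormedType.Exports.
Local Open Scope classical_set_scope.
Local Open Scope ring_scope.

(* Output alphabets: a countable alphabet is encoded into nat (letters outside
   the image get probability 0).  Input alphabet A is finite.
   A channel W : A ~> nat is W a b = W(b|a). *)

Section Info.
Variable R : realType.
Variable A : finType.

Definition log2 (x : R) : R := ln x / ln 2.

Definition is_distr (p : A -> R) : Prop :=
  (forall a, 0 <= p a) /\ \sum_(a : A) p a = 1.

Definition is_channel (W : A -> nat -> R) : Prop :=
  (forall a b, 0 <= W a b) /\
  (forall a, (fun N => \sum_(b < N) W a b) @ \oo --> (1 : R)).

Definition outd (W : A -> nat -> R) (p : A -> R) (b : nat) : R :=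
  \sum_(a : A) p a * W a b.

Definition idens (W : A -> nat -> R) (p : A -> R) (a : A) (b : nat) : R :=
  if (0 < W a b) && (0 < outd W p b) then log2 (W a b / outd W p b) else 0.

Definition minfo (W : A -> nat -> R) (p : A -> R) : R :=
  limn (fun N : nat => \sum_(b < N) \sum_(a : A) p a * W a b * idens W p a b).

Definition minpos (W : A -> nat -> R) : R :=
  inf [set r : R | exists a b, r = W a b /\ W a b != 0].

Definition phiW (W : A -> nat -> R) : \bar R :=
  if 0 < minpos W then (- log2 (minpos W))%:E else +oo%E.

End Info.

(* Main.v *)
Require Import Defs.
From mathcomp Require Import all_boot all_order all_algebra.
From mathcomp Require Import all_classical all_reals all_analysis.
From mathcomp Require Import ring lra.
Import Order.TTheory GRing.Theory Num.Theory numFieldNormedType.Exports.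
Local Open Scope classical_set_scope.
Local Open Scope ring_scope.

Section Aux.
Variable R : realType.

Lemma L1 (x z : R) : 0 <= x -> 0 < z -> x - z <= x * (ln x - ln z).
Proof.
move=> x0 z0; have [->|xp] := eqVneq x 0; first by rewrite mul0r sub0r oppr_le0 ltW.
have xp' : 0 < x by rewrite lt_def xp x0.
have h := @le_ln1Dx R (z / x - 1).
have : ln (z / x) <= z / x - 1.
  rewrite -[X in ln X](addrNK 1) addrC; apply: h.
  by rewrite ltrBrDl subrr divr_gt0.
rewrite ln_div ?posrE // => hl.
have := ler_wpM2l (ltW xp') hl.
rewrite mulrBr mulrBr mulr1 mulrCA divff // mulr1 => hh.
rewrite mulrBr; lra.
Qed.

Lemma xlnx_conv (l x y : R) : 0 <= l <= 1 -> 0 <= x -> 0 <= y ->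
  (l * x + (1 - l) * y) * ln (l * x + (1 - l) * y) <= l * (x * ln x) + (1 - l) * (y * ln y).
Proof.
move=> /andP[l0 l1] x0 y0.
set z := l * x + (1 - l) * y.
have l1' : 0 <= 1 - l by rewrite subr_ge0.
have [z0|zp] := eqVneq z 0.
  have : l * x = 0 /\ (1 - l) * y = 0.
    move/eqP: z0; rewrite paddr_eq0 ?mulr_ge0 // => /andP[/eqP -> /eqP ->]; by [].
  move=> [h1 h2]; rewrite z0 mul0r mulrA mulrA h1 h2 !mul0r addr0; by [].
have zp' : 0 < z by rewrite lt_def zp addr_ge0 ?mulr_ge0.
have h1 := ler_wpM2l l0 (@L1 x z x0 zp').
have h2 := ler_wpM2l l1' (@L1 y z y0 zp').
have e3 : z * ln z = l * x * ln z + (1 - l) * y * ln z by rewrite /z; ring.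
have e4 : l * (x - z) + (1 - l) * (y - z) = 0 by rewrite /z; ring.
rewrite -/z e3; move: h1 h2 e4; rewrite !mulrBr !mulrA; lra.
Qed.
End Aux.


Section Chan.
Variable R : realType.
Variable A : finType.
Variable W : A -> nat -> R.
Hypothesis W0 : forall a b, 0 <= W a b.

Definition gI (p : A -> R) b :=
  \sum_(a : A) p a * W a b * (ln (W a b) - ln (outd W p b)).

Lemma le_q (p : A -> R) a b : (forall a, 0 <= p a) -> p a * W a b <= outd W p b.
Proof.
move=> p0; rewrite /outd (bigD1 a) //= lerDl.
by apply: sumr_ge0 => i _; rewrite mulr_ge0.
Qed.

Lemma q_ge0 (p : A -> R) b : (forall a, 0 <= p a) -> 0 <= outd W p b.
Proof. by move=> p0; apply: sumr_ge0 => i _; rewrite mulr_ge0. Qed.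

Lemma term_eq (p : A -> R) b : (forall a, 0 <= p a) ->
  \sum_(a : A) p a * W a b * idens W p a b = gI p b / ln 2.
Proof.
move=> p0; rewrite /gI mulr_suml; apply: eq_bigr => a _.
rewrite /idens; case: ifP => [/andP[w q]|].
  by rewrite /log2 ln_div ?posrE // mulrA.
move=> /negbT; rewrite negb_and -!leNgt => /orP[w|q].
  have -> : W a b = 0 by apply/eqP; rewrite eq_le w W0.
  by rewrite !(mulr0, mul0r).
have : p a * W a b = 0.
  by apply/eqP; rewrite eq_le mulr_ge0 ?W0 ?p0 // andbT (le_trans (le_q _ _ _ p0)).
by move=> ->; rewrite !mul0r.
Qed.

Lemma g_ge0 (p : A -> R) b : is_distr p -> 0 <= gI p b.
Proof.
move=> [p0 p1].
have [q0|qp] := eqVneq (outd W p b) 0.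
  rewrite /gI big1 // => a _.
  have -> : p a * W a b = 0.
    by apply/eqP; rewrite eq_le mulr_ge0 ?W0 ?p0 // andbT -q0 (le_q _ _ _ p0).
  by rewrite mul0r.
have qp' : 0 < outd W p b by rewrite lt_def qp q_ge0.
apply: (@le_trans _ _ (\sum_(a : A) p a * (W a b - outd W p b))).
  rewrite (eq_bigr (fun a => p a * W a b - p a * outd W p b)); last first.
    by move=> a _; rewrite mulrBr.
  by rewrite sumrB -mulr_suml p1 mul1r /outd subrr.
apply: ler_sum => a _; rewrite -mulrA; apply: ler_wpM2l; first exact: p0.
exact: L1.
Qed.

Definition mixd (l : R) (p1 p2 : A -> R) a := l * p1 a + (1 - l) * p2 a.

Lemma g_conc (p1 p2 : A -> R) l b : is_distr p1 -> is_distr p2 -> 0 <= l <= 1 ->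
  l * gI p1 b <= gI (mixd l p1 p2) b.
Proof.
move=> d1 d2 hl.
have gE : forall p, gI p b = \sum_(a : A) p a * W a b * ln (W a b) -
            outd W p b * ln (outd W p b).
  move=> p; rewrite /gI (eq_bigr (fun a => p a * W a b * ln (W a b) -
      p a * W a b * ln (outd W p b))); last by move=> a _; rewrite mulrBr.
  by rewrite sumrB /outd mulr_suml.
have qE : outd W (mixd l p1 p2) b = l * outd W p1 b + (1 - l) * outd W p2 b.
  rewrite /outd /mixd !mulr_sumr -big_split /=; apply: eq_bigr => a _; ring.
have eE : \sum_(a : A) mixd l p1 p2 a * W a b * ln (W a b) =
    l * \sum_(a : A) p1 a * W a b * ln (W a b) +
    (1 - l) * \sum_(a : A) p2 a * W a b * ln (W a b).
  rewrite /mixd !mulr_sumr -big_split /=; apply: eq_bigr => a _; ring.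
have g2 := @g_ge0 p2 b d2.
have := @xlnx_conv R _ _ _ hl (@q_ge0 p1 b d1.1) (@q_ge0 p2 b d2.1).
rewrite (gE (mixd l p1 p2)) (gE p1) eE qE; move: g2; rewrite gE.
have l1 : 0 <= 1 - l by case/andP: hl => _; rewrite subr_ge0.
move=> g2 hc.
have := mulr_ge0 l1 g2; rewrite mulrBr => g2'.
rewrite mulrBr; lra.
Qed.

Hypothesis Wsum : forall a N, \sum_(b < N) W a b <= 1.

Lemma gibbs (p : A -> R) : is_distr p ->
  \sum_(a : A) p a * - ln (p a) <= ln (#|A|%:R).
Proof.
move=> [p0 p1].
have cA : (0 < #|A|)%N.
  rewrite lt0n; apply/negP => /eqP/card0_eq h.
  by move: p1; rewrite big_pred0 // => /esym/eqP; rewrite oner_eq0.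
have cA' : 0 < (#|A|%:R : R) by rewrite ltr0n.
have h : forall a, p a * - ln (p a) <= p a * ln (#|A|%:R) + (#|A|%:R)^-1 - p a.
  move=> a; have cAi : 0 < (#|A|%:R : R)^-1 by rewrite invr_gt0.
  have := @L1 R _ _ (p0 a) cAi; rewrite lnV ?posrE //.
  rewrite mulrBr mulrN opprK => hh; rewrite mulrN; lra.
apply: (le_trans (ler_sum _ (fun a _ => h a))).
rewrite sumrB big_split /= -mulr_suml p1 mul1r sumr_const.
by rewrite -[_^-1 *+ _]mulr_natr mulVf ?gt_eqF // addrK.
Qed.


Lemma g_up_term (p : A -> R) a b : (forall a, 0 <= p a) ->
  p a * W a b * (ln (W a b) - ln (outd W p b)) <= p a * W a b * - ln (p a).
Proof.
move=> p0.
have [e|ne] := eqVneq (p a * W a b) 0; first by rewrite e !mul0r.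
have pw : 0 < p a * W a b by rewrite lt_def ne mulr_ge0.
have wa : 0 < W a b.
  by rewrite lt_def W0 andbT; apply/negP => /eqP h; move: ne; rewrite h mulr0 eqxx.
have pa : 0 < p a.
  by rewrite lt_def p0 andbT; apply/negP => /eqP h; move: ne; rewrite h mul0r eqxx.
have qp : 0 < outd W p b by apply: lt_le_trans pw (le_q _ _ _ p0).
apply: ler_wpM2l; first exact: ltW.
have : ln (p a * W a b) <= ln (outd W p b) by rewrite ler_ln ?posrE // le_q.
rewrite lnM ?posrE //; lra.
Qed.

Lemma g_up (p : A -> R) N : is_distr p ->
  \sum_(b < N) gI p b <= ln (#|A|%:R).
Proof.
move=> dp; apply: (le_trans _ (@gibbs p dp)); case: dp => p0 p1.
apply: (@le_trans _ _ (\sum_(b < N) \sum_(a : A) p a * W a b * - ln (p a))).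
  by apply: ler_sum => b _; apply: ler_sum => a _; apply: g_up_term.
rewrite exchange_big /=; apply: ler_sum => a _.
rewrite (eq_bigr (fun b : 'I_N => (p a * - ln (p a)) * W a b)); last first.
  by move=> b _; rewrite mulrAC.
rewrite -mulr_sumr; apply: ler_piMr => //.
rewrite mulr_ge0 // oppr_ge0 ln_le0 //.
rewrite -p1 (bigD1 a) //= lerDl; exact: sumr_ge0.
exact: Wsum.
Qed.

Definition SN (p : A -> R) (N : nat) := \sum_(b < N) gI p b / ln 2.

Lemma ln2_gt0 : 0 < ln (2 : R).
Proof. by apply: ln_gt0; rewrite ltr1n. Qed.

Lemma minfoE (p : A -> R) : (forall a, 0 <= p a) -> minfo W p = limn (SN p).
Proof.
move=> p0; rewrite /minfo /SN; congr (lim (_ @ \oo)); apply: funext => N.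
by apply: eq_bigr => b _; rewrite term_eq.
Qed.

Lemma SN_nd (p : A -> R) : is_distr p -> nondecreasing_seq (SN p).
Proof.
move=> dp; apply/nondecreasing_seqP => n; rewrite /SN big_ord_recr /= lerDl.
by rewrite divr_ge0 ?g_ge0 // ltW // ln2_gt0.
Qed.

Lemma SN_ub (p : A -> R) N : is_distr p -> SN p N <= ln (#|A|%:R) / ln 2.
Proof.
move=> dp; rewrite /SN -mulr_suml ler_wpM2r ?invr_ge0 ?(ltW ln2_gt0) //.
exact: g_up.
Qed.

Lemma SN_cvg (p : A -> R) : is_distr p -> cvgn (SN p).
Proof.
move=> dp; apply: nondecreasing_is_cvgn; first exact: SN_nd.
by exists (ln (#|A|%:R) / ln 2) => _ [N _ <-]; apply: SN_ub.
Qed.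

Lemma minfo_ub (p : A -> R) : is_distr p -> minfo W p <= ln (#|A|%:R) / ln 2.
Proof.
move=> dp; rewrite minfoE; last by case: dp.
apply: limr_le; first exact: SN_cvg.
by apply: nearW => N; apply: SN_ub.
Qed.

Lemma minfo_ge0 (p : A -> R) : is_distr p -> 0 <= minfo W p.
Proof.
move=> dp; rewrite minfoE; last by case: dp.
apply: limr_ge; first exact: SN_cvg.
apply: nearW => N; rewrite /SN -mulr_suml divr_ge0 ?(ltW ln2_gt0) //.
by apply: sumr_ge0 => b _; apply: g_ge0.
Qed.

Lemma mix_distr (p1 p2 : A -> R) l : is_distr p1 -> is_distr p2 -> 0 <= l <= 1 ->
  is_distr (mixd l p1 p2).
Proof.
move=> [a1 b1] [a2 b2] /andP[l0 l1]; split.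
  by move=> a; rewrite /mixd addr_ge0 ?mulr_ge0 ?subr_ge0.
by rewrite /mixd big_split /= -!mulr_sumr b1 b2 !mulr1 addrC subrK.
Qed.

Lemma minfo_mix (p1 p2 : A -> R) l : is_distr p1 -> is_distr p2 -> 0 <= l <= 1 ->
  l * minfo W p1 <= minfo W (mixd l p1 p2).
Proof.
move=> d1 d2 hl; have dm := @mix_distr p1 p2 l d1 d2 hl.
rewrite (@minfoE p1 d1.1) (@minfoE _ dm.1).
have c1 := @SN_cvg p1 d1; have c2 := @SN_cvg _ dm.
have c1' : (fun N => l * SN p1 N) @ \oo --> l * limn (SN p1).
  by apply: (@cvgM _ _ _ _ (fun=> l) (SN p1)); [exact: cvg_cst | exact: c1].
apply: (ler_cvg_to c1' c2).
apply: nearW => N; rewrite /SN -!mulr_suml mulrA ler_wpM2r ?invr_ge0 ?(ltW ln2_gt0) //.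
rewrite mulr_sumr; apply: ler_sum => b _; exact: g_conc.
Qed.
End Chan.


Section Key.
Variable R : realType.
Variable A : finType.

Lemma chan_sum (W : A -> nat -> R) : is_channel W -> forall a N, \sum_(b < N) W a b <= 1.
Proof.
move=> [W0 Wc] a N.
have nd : nondecreasing_seq (fun N => \sum_(b < N) W a b).
  by apply/nondecreasing_seqP => n; rewrite big_ord_recr /= lerDl.
have := nondecreasing_cvgn_le nd (cvgP _ (Wc a)) N.
by rewrite (cvg_lim _ (Wc a)).
Qed.

Lemma distr_card (p : A -> R) : is_distr p -> (0 < #|A|)%N.
Proof.
move=> [_ p1]; rewrite lt0n; apply/negP => /eqP/card0_eq h.
by move: p1; rewrite big_pred0 // => /esym/eqP; rewrite oner_eq0.
Qed.

Lemma phi_ge0 (W : A -> nat -> R) : is_channel W -> (0 <= phiW W)%E.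
Proof.
move=> Wch; rewrite /phiW; case: ifP => [mp|_]; last exact: le0y.
rewrite lee_fin oppr_ge0 /log2 pmulr_lle0 ?invr_gt0 ?ln2_gt0 //.
apply: ln_le0.
set S := [set r : R | exists a b, r = W a b /\ W a b != 0].
have nS : S !=set0.
  apply/set0P; apply/negP => /eqP e.
  by move: mp; rewrite /minpos -/S e inf0 ltxx.
case: nS => s Ss; have Ss' := Ss; case: Ss' => a [b [sE _]].
have lb : has_lbound S by exists 0 => r [a' [b' [-> _]]]; exact: Wch.1.
apply: le_trans (ge_inf lb Ss) _; rewrite sE.

apply: (le_trans _ (chan_sum _ Wch a b.+1)).
by rewrite big_ord_recr /= lerDr; apply: sumr_ge0 => i _; exact: Wch.1.
Qed.

Lemma key (W : A -> nat -> R) (pbar : A -> R) (d c : R) :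
  is_channel W -> is_distr pbar ->
  (forall p, is_distr p -> minfo W p <= minfo W pbar) ->
  0 <= d <= 1 -> c = #|A|%:R ->
  let ph := fun x => (1 - d) * pbar x + d / c in
  0 <= minfo W pbar - minfo W ph <= d * (ln c / ln 2).
Proof.
move=> Wch dp mx /andP[d0 d1] ->.
have cA := distr_card _ dp.
have cA' : 0 < (#|A|%:R : R) by rewrite ltr0n.
set u := fun _ : A => (#|A|%:R : R)^-1.
have du : is_distr u.
  split; first by move=> a; rewrite /u invr_ge0 ltW.
  rewrite /u sumr_const -[_ *+ _]mulr_natr mulVf // gt_eqF //.
have hl : 0 <= 1 - d <= 1 by apply/andP; split; lra.
have pE : (fun x => (1 - d) * pbar x + d / #|A|%:R) = @mixd R A (1 - d) pbar u.
  by apply: funext => x; rewrite /mixd /u; congr (_ + _); ring.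
change (0 <= minfo W pbar - minfo W (fun x => (1 - d) * pbar x + d / #|A|%:R) <= d * (ln (#|A|%:R : R) / ln 2)); rewrite pE.
have dm := mix_distr _ _ _ _ _ dp du hl.
have W0 := Wch.1.
have Ws := chan_sum _ Wch.
have h1 := mx _ dm.
have h2 := minfo_mix _ _ _ W0 Ws _ _ _ dp du hl.
have h3 := minfo_ub _ _ _ W0 Ws _ dp.
apply/andP; split; first by rewrite subr_ge0.
have := ler_wpM2l d0 h3. lra.
Qed.
End Key.


Theorem proposition8 (R : realType) (X : finType)
  (V : forall n : nat, {ffun 'I_n -> X} -> nat -> R)
  (pbar : forall n : nat, {ffun 'I_n -> X} -> R)
  (delta : nat -> R) :
  (forall n, is_channel (V n)) ->
  (forall n, is_distr (pbar n)) ->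
  (forall n (p : {ffun 'I_n -> X} -> R), is_distr p ->
      minfo (V n) p <= minfo (V n) (pbar n)) ->
  (forall n, 0 <= delta n <= 1) ->
  let phat := fun n (x : {ffun 'I_n -> X}) =>
      (1 - delta n) * pbar n x + delta n / (#|X|%:R ^+ n) in
  (exists C : R, \forall n \near \oo,
      ((`|minfo (V n) (pbar n) - minfo (V n) (phat n)|)%:E
        <= C%:E * ((delta n)%:E * ((n%:R)%:E + phiW (V n))))%E)
  /\
  ((fun n => ((delta n)%:E * phiW (V n))%E) @ \oo --> 0%E ->
   delta @ \oo --> (0 : R) ->
   forall IV : R,
   (fun n : nat => minfo (V n) (pbar n) / n%:R) @ \oo --> IV ->
   (fun n : nat => minfo (V n) (phat n) / n%:R) @ \oo --> IV)
  /\
  ((fun n => ((delta n)%:E * phiW (V n))%E) @ \oo --> 0%E ->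
   (fun n : nat => n%:R * delta n) @ \oo --> (0 : R) ->
   (fun n : nat => minfo (V n) (pbar n) - minfo (V n) (phat n)) @ \oo --> (0 : R)).
Proof.
move=> Vch dp mx hd phat.
have cX : (0 < #|X|)%N.
  by have := distr_card _ _ _ (dp 1%N); rewrite card_ffun card_ord expn1.
have cX' : 0 < (#|X|%:R : R) by rewrite ltr0n.
set K := ln (#|X|%:R : R) / ln 2.
have K0 : 0 <= K by rewrite divr_ge0 ?ln_ge0 ?ler1n ?(ltW (ln2_gt0 _)).
set D := fun n => minfo (V n) (pbar n) - minfo (V n) (phat n).
have hD : forall n, 0 <= D n <= delta n * (n%:R * K).
  move=> n.
  have := key _ _ (V n) (pbar n) (delta n) (#|X|%:R ^+ n) (Vch n) (dp n) (mx n) (hd n).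
  rewrite card_ffun card_ord natrX => /(_ erefl) h; cbv zeta in h.
  rewrite /D /phat; move: h; rewrite lnXn // -[ln _ *+ n]mulr_natl.
  by move=> h; rewrite -mulrA -/K in h.
split.
  exists K; apply: nearW => n.
  have /andP[D0 D1] := hD n.
  rewrite -/(D n) ger0_norm //.
  apply: (@le_trans _ _ ((K * (delta n * n%:R))%:E)).
    by rewrite lee_fin; lra.
  rewrite !EFinM; apply: lee_wpmul2l; first by rewrite lee_fin.
  apply: lee_wpmul2l; first by rewrite lee_fin; case/andP: (hd n).
  by apply: leeDl; exact: phi_ge0.
split.
  move=> _ d0 IV hI.
  have hDn : (fun n => D n / n%:R) @ \oo --> (0 : R).
    apply: (@squeeze_cvgr _ _ _ _ (fun=> 0) (fun n => delta n * K)).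
    - apply: nearW => n; have /andP[D0 D1] := hD n.
      rewrite divr_ge0 //=.
      have [->|nz] := eqVneq n 0%N; first by rewrite invr0 mulr0 mulr_ge0 //; case/andP: (hd 0%N).
      have np : 0 < (n%:R : R) by rewrite ltr0n lt0n.
      rewrite ler_pdivrMr //; lra.
    - exact: cvg_cst.
    - by rewrite -(mul0r K); apply: cvgMl.
  have -> : (fun n => minfo (V n) (phat n) / n%:R) =
            (fun n => minfo (V n) (pbar n) / n%:R - D n / n%:R).
    by apply: funext => n; rewrite /D mulrBl opprB addrC subrK.
  by rewrite -[IV]subr0; apply: cvgB.
move=> _ nd.
apply: (@squeeze_cvgr _ _ _ _ (fun=> 0) (fun n => K * (n%:R * delta n))).
- by apply: nearW => n; have /andP[D0 D1] := hD n; rewrite D0 /=; lra.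
- exact: cvg_cst.
- by rewrite -(mulr0 K); apply: cvgMr.
Qed.
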